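(* Let $N\ge2$, $d\ge1$, and let $\Sigma\subset\mathbb{Z}_N^d$ be a nonempty Salem set at level $\Lambda_{\text{Salem}}$ with $\mathrm{dens}(\Sigma)=N^{-d}|\Sigma|<1$. Then for every $f:\mathbb{Z}_N^d\to\mathbb{C}$ whose Fourier transform $\hat f$ is supported in $\Sigma$, $$\Big(\frac{1}{|\Sigma|}\sum_{m\in\Sigma}|\hat f(m)|^2\Big)^{1/2}\le \frac{N^{-d}\,|\Sigma|^{-1/4}\,\Lambda_{\text{Salem}}^{1/2}\sum_{x\in\mathbb{Z}_N^d}|f(x)|}{\sqrt{1-\mathrm{dens}(\Sigma)}}.$$
   Context: $\chi(t)=e^{2\pi i t/N}$, $\hat f(m)=N^{-d}\sum_{x}\chi(-x\cdot m)f(x)$. Sets are identified with indicator functions, so $\hat S(z)=N^{-d}\sum_{x\in S}\chi(-x\cdot z)$. A set $S\subset\mathbb{Z}_N^d$ is a Salem set at level $\Lambda_{\text{Salem}}$ if $|\hat S(z)|\le \Lambda_{\text{Salem}}N^{-d}|S|^{1/2}$ for all $z\ne0$. *)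

(* Defs.v *)
From HB Require Import structures.
From mathcomp Require Import all_boot all_order all_algebra.
From mathcomp Require Import complex.
From mathcomp Require Import all_classical all_reals.
From mathcomp Require Import trigo.
Set Implicit Arguments. Unset Strict Implicit. Unset Printing Implicit Defensive.
Import Order.TTheory GRing.Theory Num.Theory.
Local Open Scope ring_scope.
Local Open Scope complex_scope.

(* The group Z_N^d, represented as functions 'I_d -> 'Z_N (N >= 2 assumed in
   the theorem, so that 'Z_N is really Z/NZ). *)
Definition ZNd (N d : nat) := {ffun 'I_d -> 'Z_N}.

Definition dotZ (N d : nat) (x m : ZNd N d) : int :=
  (\sum_(i < d) ((nat_of_ord (x i) * nat_of_ord (m i))%N)%:Z)%R.

Definition chi (R : realType) (N : nat) (t : int) : R[i] :=
  (cos (2 * pi * t%:~R / N%:R) +i* sin (2 * pi * t%:~R / N%:R))%C.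

Definition fourier (R : realType) (N d : nat) (f : ZNd N d -> R[i]) (m : ZNd N d)
  : R[i] :=
  (N%:R ^- d) * \sum_(x : ZNd N d) chi R N (- dotZ x m) * f x.

Definition indic (R : realType) (N d : nat) (S : {set ZNd N d}) (x : ZNd N d) : R[i] :=
  if x \in S then 1 else 0.

Definition cmod (R : realType) (z : R[i]) : R :=
  Num.sqrt (complex.Re z ^+ 2 + complex.Im z ^+ 2).

Definition salem (R : realType) (N d : nat) (S : {set ZNd N d}) (Lambda : R) : Prop :=
  forall z : ZNd N d, z != 0 ->
    cmod (fourier (indic R S) z) <= Lambda * N%:R ^- d * Num.sqrt (#|S|%:R).

Definition dens (R : realType) (N d : nat) (S : {set ZNd N d}) : R :=
  N%:R ^- d * #|S|%:R.

(* Main.v *)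
Require Import Defs.
From HB Require Import structures.
From mathcomp Require Import all_boot all_order all_algebra.
From mathcomp Require Import complex.
From mathcomp Require Import all_classical all_reals.
From mathcomp Require Import trigo.
From mathcomp Require Import ring lra.
Import Order.TTheory GRing.Theory Num.Theory.
Local Open Scope ring_scope.
Local Open Scope complex_scope.
Set Implicit Arguments. Unset Strict Implicit. Unset Printing Implicit Defensive.

Section Chi.
Variables (R : realType) (N : nat).
Hypothesis hN : (2 <= N)%N.

Lemma chiD (a b : int) : chi R N (a + b) = chi R N a * chi R N b.
Proof.
rewrite /chi; have -> : 2 * pi * (a + b)%:~R / N%:R = 2 * pi * a%:~R / N%:R + 2 * pi * b%:~R / N%:R :> R.
  by rewrite intrD; ring.
rewrite cosD sinD; simpc; congr (_ +i* _); ring.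
Qed.

Lemma chi0 : chi R N 0 = 1.
Proof. by rewrite /chi mulr0 mul0r cos0 sin0. Qed.

Lemma chiN (a : int) : chi R N (- a) = conjc (chi R N a).
Proof.
rewrite /chi; have -> : 2 * pi * (- a)%:~R / N%:R = - (2 * pi * a%:~R / N%:R) :> R.
  by rewrite intrN; ring.
by rewrite cosN sinN.
Qed.

Lemma chiJK (a : int) : conjc (chi R N a) * chi R N a = 1.
Proof. by rewrite -chiN -chiD addNr chi0. Qed.

Lemma chi_per (a : int) (n : nat) : chi R N (a + (N * n)%N%:Z) = chi R N a.
Proof.
have NR : (N%:R : R) != 0 by rewrite pnatr_eq0 -lt0n (leq_trans _ hN).
rewrite /chi; suff -> : 2 * pi * (a + (N * n)%N%:Z)%:~R / N%:R = 2 * pi * a%:~R / N%:R + ((pi : R) *+ 2) *+ n.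
  by rewrite (periodicn (@cosD2pi R)) (periodicn (@sinD2pi R)).
have E : ((N * n)%N%:Z)%:~R = (N%:R * n%:R : R).
  by rewrite -natrM.
rewrite intrD E -mulrnA -(mulr_natr pi) natrM. field. exact: NR.
Qed.


Lemma chi_sum (I : finType) (t : I -> int) :
  chi R N (\sum_i t i) = \prod_i chi R N (t i).
Proof. exact: (big_morph _ chiD chi0). Qed.

Lemma valZpD (a b : 'Z_N) : nat_of_ord (a + b) = ((a + b) %% N)%N.
Proof. rewrite /=; congr (_ %% _)%N; exact: Zp_cast. Qed.

Lemma chi_coordD (a b : 'Z_N) (c : nat) :
  chi R N ((nat_of_ord (a + b)%R * c)%N%:Z) =
  chi R N ((nat_of_ord a * c)%N%:Z) * chi R N ((nat_of_ord b * c)%N%:Z).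
Proof.
rewrite -chiD -PoszD -mulnDl valZpD.
rewrite {2}(divn_eq (a + b) N) mulnDl PoszD.
by rewrite (mulnC _ N) -mulnA addrC chi_per.
Qed.


Lemma chi_ne1 (k : nat) : (0 < k < N)%N -> chi R N k%:Z != 1.
Proof.
move=> /andP[k0 kN].
have N0 : (0 : R) < N%:R by rewrite ltr0n (leq_trans _ hN).
set x : R := 2 * pi * (k%:Z)%:~R / N%:R.
have x0 : 0 < x.
  by rewrite /x divr_gt0 // mulr_gt0 // ?mulr_gt0 ?pi_gt0 // ltr0n.
have x2 : x < pi *+ 2.
  rewrite /x ltr_pdivrMr // (_ : (k%:Z)%:~R = k%:R :> R) //.
  rewrite -[pi *+ 2]mulr_natl.
  by rewrite ltr_pM2l ?ltr_nat // mulr_gt0 // pi_gt0.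
rewrite /chi -/x; apply/negP => /eqP [] hc hs.
case: (ltgtP x pi) => hx.
- have : 0 < sin x by apply: sin_gt0_pi; rewrite x0 hx.
  by rewrite hs ltxx.
- have : 0 < sin (x - pi) by apply: sin_gt0_pi; rewrite subr_gt0 hx /= ltrBlDr -mulr2n.
  move=> h; have := @sinDpi R (x - pi); rewrite subrK hs => /eqP.
  by rewrite eq_sym oppr_eq0 => /eqP h0; rewrite h0 ltxx in h.
- by move: hc; rewrite hx cospi => /eqP /eqP; lra.
Qed.

End Chi.

Section Ortho.
Variables (R : realType) (N d : nat).
Hypothesis hN : (2 <= N)%N.
Local Notation G := (ZNd N d).

Definition E (x m : G) : R[i] := chi R N (dotZ x m).

Lemma E_prod x m : E x m = \prod_i chi R N ((nat_of_ord (x i) * nat_of_ord (m i))%N%:Z).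
Proof. by rewrite /E /dotZ chi_sum. Qed.

Lemma E_sym x m : E x m = E m x.
Proof. by rewrite !E_prod; apply: eq_bigr => i _; rewrite mulnC. Qed.

Lemma E_addl x y m : E (x + y) m = E x m * E y m.
Proof.
rewrite !E_prod -big_split; apply: eq_bigr => i _ /=.
by rewrite ffunE chi_coordD.
Qed.

Lemma E_0l m : E 0 m = 1.
Proof. by rewrite E_prod big1 // => i _; rewrite ffunE /= mul0n chi0. Qed.

Lemma E_sub x y m : conjc (E x m) * E y m = conjc (E (x - y) m).
Proof.
have -> : E x m = E (x - y) m * E y m by rewrite -E_addl subrK.
by rewrite rmorphM -mulrA /E chiJK mulr1.
Qed.

Lemma card_G : #|G| = (N ^ d)%N.
Proof. by rewrite card_ffun !card_ord Zp_cast. Qed.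

Lemma sumE z : \sum_m E z m = if z == 0 then (N ^ d)%:R else 0.
Proof.
case: eqP => [->|/eqP zn0].
  by rewrite (eq_bigr (fun _ => 1)) => [|m _]; rewrite ?E_0l // sumr_const card_G.
have [i zi] : exists i, z i != 0.
  case: (pickP (fun i => z i != 0)) => [i zi|h]; first by exists i.
  case/eqP: zn0; apply/ffunP => i; rewrite ffunE.
  by move: (h i) => /negbFE/eqP.
pose e : G := [ffun j => if j == i then 1 else 0].
have Ee : E z e != 1.
  rewrite E_prod (bigD1 i) //= big1 => [|j ji]; last first.
    by rewrite ffunE (negbTE ji) /= muln0 chi0.
  rewrite mulr1 ffunE eqxx /= modn_small // muln1.
  apply: chi_ne1 => //; rewrite lt0n; apply/andP; split.
    by move: zi; apply: contra => /eqP h; apply/eqP/val_inj.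
  by rewrite -[X in (_ < X)%N](Zp_cast hN).
set S := \sum_m E z m.
have hS : S = S * E z e.
  rewrite {1}/S (reindex_inj (addIr e)) mulr_suml; apply: eq_bigr => m _.
  by rewrite E_sym E_addl (E_sym m) (E_sym e).
have : S * (1 - E z e) = 0 by rewrite mulrBr mulr1 -hS subrr.
by move/eqP; rewrite mulf_eq0 subr_eq0 [1 == _]eq_sym (negbTE Ee) orbF => /eqP.
Qed.

End Ortho.

Section Key.
Variables (R : realType) (N d : nat).
Hypothesis hN : (2 <= N)%N.
Local Notation G := (ZNd N d).
Local Notation c := ((N%:R : R[i]) ^- d).

Lemma conjcM (a b : R[i]) : conjc (a * b) = conjc a * conjc b.
Proof. exact: rmorphM. Qed.

Lemma conjc_sum (I : finType) (F : I -> R[i]) : conjc (\sum_i F i) = \sum_i conjc (F i).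
Proof. exact: rmorph_sum. Qed.

Lemma cJ : conjc c = c.
Proof. by rewrite conjc_inv rmorphXn rmorph_nat. Qed.

Lemma fourierE (f : G -> R[i]) m : fourier f m = c * \sum_x conjc (E R x m) * f x.
Proof. by rewrite /fourier; congr (_ * _); apply: eq_bigr => x _; rewrite chiN. Qed.

Lemma key (f g : G -> R[i]) :
  \sum_m g m * (fourier f m * conjc (fourier f m)) =
  c * \sum_x \sum_y f x * conjc (f y) * fourier g (x - y).
Proof.
transitivity (\sum_m \sum_x \sum_y c * c * (g m * (conjc (E R x m) * f x) * (E R y m * conjc (f y)))).
  apply: eq_bigr => m _; rewrite fourierE conjcM conjc_sum cJ.
  transitivity (c * c * g m * ((\sum_x conjc (E R x m) * f x) *
     (\sum_y conjc (conjc (E R y m) * f y)))); first by ring.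
  rewrite big_distrlr mulr_sumr; apply: eq_bigr => x _.
  rewrite mulr_sumr; apply: eq_bigr => y _.
  by rewrite conjcM conjcK /= !mulrA.
rewrite exchange_big mulr_sumr; apply: eq_bigr => x _.
rewrite exchange_big mulr_sumr; apply: eq_bigr => y _.
rewrite fourierE mulrA mulrA mulr_sumr; apply: eq_bigr => m _.
rewrite (E_sym _ m) -(E_sub R hN); ring.
Qed.


Lemma cN0 : (N%:R : R[i]) ^+ d != 0.
Proof. have h : (N == 0)%N = false by apply/negbTE; rewrite -lt0n (leq_trans _ hN).
by rewrite expf_eq0 pnatr_eq0 h andbF. Qed.

Lemma fourier1 z : fourier (fun _ : G => 1 : R[i]) z = if z == 0 then 1 else 0.
Proof.
rewrite fourierE (eq_bigr (fun m => conjc (E R z m))) => [|m _]; last by rewrite mulr1 E_sym.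
rewrite -conjc_sum (sumE R hN) (fun_if conjc) rmorph_nat conjc0.
case: eqP => _; last by rewrite mulr0.
by rewrite natrX mulVf // cN0.
Qed.

Lemma plancherel (f : G -> R[i]) :
  \sum_m fourier f m * conjc (fourier f m) = c * \sum_x f x * conjc (f x).
Proof.
have := key f (fun _ => 1); rewrite (eq_bigr (fun m => fourier f m * conjc (fourier f m))) => [->|m _]; last by rewrite mul1r.
congr (_ * _); apply: eq_bigr => x _.
rewrite (bigD1 x) //= subrr fourier1 eqxx mulr1 big1 ?addr0 // => y yx.
by rewrite fourier1 subr_eq0 eq_sym (negbTE yx) mulr0.
Qed.

End Key.
Lemma final_real (R : realType) (s A cR L F D : R) : 0 < s -> 0 <= A -> 0 < cR ->
  0 <= L -> 0 <= F -> 0 < D ->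
  D * A <= cR * (L * cR * Num.sqrt s * F ^+ 2) ->
  Num.sqrt (s^-1 * A) <= cR * (Num.sqrt (Num.sqrt s))^-1 * Num.sqrt L * F / Num.sqrt D.
Proof.
move=> s0 A0 c0 L0 F0 D0 h.
set q := Num.sqrt (Num.sqrt s).
have q0 : 0 < q by rewrite /q !sqrtr_gt0.
have sq : Num.sqrt s = q ^+ 2 by rewrite sqr_sqrtr // sqrtr_ge0.
have ss : s = q ^+ 4 by rewrite -(sqr_sqrtr (ltW s0)) sq -exprM.
set l := Num.sqrt L. have l0 : 0 <= l by rewrite sqrtr_ge0.
have Ll : L = l ^+ 2 by rewrite sqr_sqrtr.
set r := Num.sqrt D. have r0 : 0 < r by rewrite sqrtr_gt0.
have Dr : D = r ^+ 2 by rewrite sqr_sqrtr // ltW.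
rewrite sq Ll Dr in h; rewrite ss.
have X0 : 0 <= cR * q^-1 * l * F / r.
  by rewrite !mulr_ge0 // ?invr_ge0 ltW.
rewrite -(ger0_norm X0) -sqrtr_sqr ler_sqrt; last by rewrite sqr_ge0.
have -> : (cR * q^-1 * l * F / r) ^+ 2 = (q ^+ 4)^-1 * ((cR * (l ^+ 2 * cR * q ^+ 2 * F ^+ 2)) / r ^+ 2).
  by field; rewrite ?gt_eqF.
rewrite ler_pM2l ?invr_gt0 ?exprn_gt0 //.
by rewrite ler_pdivlMr ?exprn_gt0 // mulrC.
Qed.

Section CNorm.
Variable R : realType.

Lemma cmodC (z : R[i]) : (cmod z)%:C = `|z|.
Proof. by rewrite normc_def. Qed.

Lemma cmod_ge0 (z : R[i]) : 0 <= cmod z.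
Proof. exact: sqrtr_ge0. Qed.

Lemma cmod_sq (z : R[i]) : ((cmod z) ^+ 2)%:C = z * conjc z.
Proof.
case: z => a b; rewrite /cmod /= sqr_sqrtr ?addr_ge0 ?sqr_ge0 //.
rewrite /conjc; simpc; apply/eqP; rewrite eq_complex /=; apply/andP; split; apply/eqP; ring.
Qed.

Lemma norm_conj (z : R[i]) : `|conjc z| = `|z|.
Proof. by case: z => a b; rewrite !normc_def /= sqrrN. Qed.

Lemma Cge0 (a : R) : 0 <= a -> 0 <= a%:C.
Proof. by rewrite ler0c. Qed.

Lemma Csum (I : finType) (P : pred I) (F : I -> R) :
  (\sum_(i | P i) F i)%:C = \sum_(i | P i) (F i)%:C.
Proof. exact: rmorph_sum. Qed.

Lemma CM (a b : R) : (a * b)%:C = a%:C * b%:C.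
Proof. exact: rmorphM. Qed.

Lemma CB (a b : R) : (a - b)%:C = a%:C - b%:C.
Proof. exact: rmorphB. Qed.

Lemma Cnat n : (n%:R : R)%:C = n%:R.
Proof. exact: rmorph_nat. Qed.

Lemma CX (a : R) n : (a ^+ n)%:C = a%:C ^+ n.
Proof. exact: rmorphXn. Qed.

Lemma CV (a : R) : (a^-1)%:C = a%:C^-1.
Proof. exact: fmorphV. Qed.

End CNorm.


Unset Implicit Arguments.

Theorem mainTheorem4 (R : realType) (N d : nat) (hN : (2 <= N)%N) (hd : (1 <= d)%N)
  (Sigma : {set ZNd N d}) (Lambda : R)
  (hne : Sigma != finset.set0) (hsalem : salem Sigma Lambda) (hdens : dens R Sigma < 1)
  (f : ZNd N d -> R[i])
  (hsupp : forall m : ZNd N d, m \notin Sigma -> fourier f m = 0) :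
  Num.sqrt ((#|Sigma|%:R)^-1 * \sum_(m in Sigma) cmod (fourier f m) ^+ 2)
  <= (N%:R ^- d * (Num.sqrt (Num.sqrt (#|Sigma|%:R)))^-1 * Num.sqrt Lambda
      * \sum_(x : ZNd N d) cmod (f x))
     / Num.sqrt (1 - dens R Sigma).
Proof.
set s := #|Sigma|.
have s0 : (0 < s)%N by rewrite card_gt0.
have N0 : (0 : R) < N%:R by rewrite ltr0n (leq_trans _ hN).
set cR : R := N%:R ^- d.
have cR0 : 0 < cR by rewrite invr_gt0 exprn_gt0.
have cRC : cR%:C = (N%:R : R[i]) ^- d by rewrite CV CX Cnat.
have L0 : 0 <= Lambda.
  pose o : 'I_d := Ordinal hd.
  have nz : [ffun _ => 1] != 0 :> ZNd N d.
    apply/eqP => /ffunP /(_ o); rewrite !ffunE => /eqP.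
    by rewrite -val_eqE /= modn_small.
  have := le_trans (cmod_ge0 _) (hsalem _ nz).
  by rewrite pmulr_lge0 ?sqrtr_gt0 ?ltr0n // pmulr_lge0.
set F : R := \sum_x cmod (f x).
set A : R := \sum_(m in Sigma) cmod (fourier f m) ^+ 2.
set sh := fourier (indic R Sigma).
have AC : A%:C = \sum_m fourier f m * conjc (fourier f m).
  rewrite /A Csum big_mkcond; apply: eq_bigr => m _.
  case: ifP => h; first by rewrite cmod_sq.
  by rewrite hsupp ?h // mul0r.
have AS : A%:C = \sum_m indic R Sigma m * (fourier f m * conjc (fourier f m)).
  rewrite /A Csum big_mkcond; apply: eq_bigr => m _.
  by rewrite /indic; case: ifP => h; rewrite ?cmod_sq ?mul1r ?mul0r.
have P := plancherel hN f.
have K := key hN f (indic R Sigma).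
rewrite -AS in K.
have sh0 : sh 0 = (N%:R : R[i]) ^- d * s%:R.
  rewrite /sh fourierE; congr (_ * _).
  rewrite (eq_bigr (fun m => indic R Sigma m)) => [|m _]; last first.
    by rewrite E_sym E_0l conjc1 mul1r.
  by rewrite /indic -big_mkcond /= sumr_const.
set Off := \sum_x \sum_(y | y != x) f x * conjc (f y) * sh (x - y).
have Hsplit : \sum_x \sum_y f x * conjc (f y) * sh (x - y) =
    (N%:R : R[i]) ^- d * s%:R * \sum_x f x * conjc (f x) + Off.
  rewrite /Off mulr_sumr -big_split; apply: eq_bigr => x _.
  by rewrite (bigD1 x) //= subrr sh0 mulrC.
have AC' : A%:C = (N%:R : R[i]) ^- d * \sum_x f x * conjc (f x) by rewrite AC P.
have H1 : A%:C = (N%:R : R[i]) ^- d * s%:R * A%:C + (N%:R : R[i]) ^- d * Off.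
  by rewrite {1}K Hsplit mulrDr AC'; ring.
have densC : (dens R Sigma)%:C = (N%:R : R[i]) ^- d * s%:R.
  by rewrite /dens CM cRC Cnat.
have E1 : ((1 - dens R Sigma) * A)%:C = (N%:R : R[i]) ^- d * Off.
  by rewrite CM CB densC (_ : (1:R)%:C = 1) // mulrBl mul1r {1}H1; ring.
set K0 : R := Lambda * cR * Num.sqrt s%:R.
have K00 : 0 <= K0 by rewrite /K0 !mulr_ge0 ?sqrtr_ge0 // ltW.
have eqF : K0 * F ^+ 2 = \sum_x \sum_y cmod (f x) * cmod (f y) * K0.
  rewrite mulrC expr2 -mulrA {1}/F mulr_suml; apply: eq_bigr => x _.
  rewrite /F mulr_suml mulr_sumr; apply: eq_bigr => y _; ring.
have nb : `|Off| <= (K0 * F ^+ 2)%:C.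
  apply: le_trans (ler_norm_sum _ _ _) _.
  rewrite eqF Csum; apply: ler_sum => x _.
  apply: le_trans (ler_norm_sum _ _ _) _.
  rewrite Csum [X in _ <= X](bigD1 x) //=.
  apply: ler_wpDl; first by apply: Cge0; apply: mulr_ge0 => //; apply: mulr_ge0; exact: cmod_ge0.
  apply: ler_sum => y yx.
  rewrite normrM (normrM (f x)) norm_conj -!cmodC -!CM lecR.
  apply: ler_wpM2l; first by rewrite mulr_ge0 ?cmod_ge0.
  by apply: (hsalem (x - y)); rewrite subr_eq0 eq_sym.
have key_ineq : (1 - dens R Sigma) * A <= cR * (Lambda * cR * Num.sqrt s%:R * F ^+ 2).
  have h0 : 0 <= ((1 - dens R Sigma) * A)%:C.
    apply: Cge0; apply: mulr_ge0; first by rewrite subr_ge0 ltW.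
    by apply: sumr_ge0 => m _; apply: sqr_ge0.
  rewrite -lecR -(ger0_norm h0) E1 normrM CM -cRC (ger0_norm (Cge0 (ltW cR0))).
  by apply: ler_wpM2l; [exact: Cge0 (ltW cR0) | exact: nb].
apply: final_real => //.
- by rewrite ltr0n.
- by rewrite sumr_ge0 // => m _; rewrite sqr_ge0.
- by rewrite sumr_ge0 // => x _; rewrite cmod_ge0.
- by rewrite subr_gt0.
Qed.
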